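(* Let $G_0$ be the group defined in the context. The commutator subgroup $G_0'$ consists exactly of those elements $g\in G_0$ that satisfy both of the following: - $g$, as a homeomorphism of $\mathbb{R}$, has compact support; - $g$ is represented by a word over the generating set $\{x_{\mathtt s}:\mathtt s\in 2^{<\mathbb{N}}\}\cup\{y_{\mathtt s}:\mathtt s \text{ non-constant}\}$ in which the total exponent of the $y$-generators is zero.
   Context: Let $2^{\mathbb{N}}$ be the set of infinite binary sequences and $2^{<\mathbb{N}}$ the set of finite ones. Define maps of $2^{\mathbb{N}}$ as follows. - $x$ is given by $x(\mathtt{00}\xi)=\mathtt{0}\xi$, $x(\mathtt{01}\xi)=\mathtt{10}\xi$, $x(\mathtt{1}\xi)=\mathtt{11}\xi$. - $y$ and $y^{-1}$ are defined recursively by $y(\mathtt{00}\xi)=\mathtt{0}y(\xi)$, $y(\mathtt{01}\xi)=\mathtt{10}y^{-1}(\xi)$, $y(\mathtt{1}\xi)=\mathtt{11}y(\xi)$, and $y^{-1}(\mathtt{0}\xi)=\mathtt{00}y^{-1}(\xi)$, $y^{-1}(\mathtt{10}\xi)=\mathtt{01}y(\xi)$, $y^{-1}(\mathtt{11}\xi)=\mathtt{1}y^{-1}(\xi)$. - For a finite sequence $\mathtt s$, $x_{\mathtt s}(\mathtt s\xi)=\mathtt s x(\xi)$, and $x_{\mathtt s}$ is the identity on sequences not beginning with $\mathtt s$. The map $y_{\mathtt s}$ is defined similarly. A finite sequence is constant if it is of the form $\mathtt0^n$ or $\mathtt1^n$. Define $\varphi(\mathtt0\xi)=1/(1+1/\varphi(\xi))$,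 $\varphi(\mathtt1\xi)=1+\varphi(\xi)$, $\Phi(\mathtt0\xi)=-\varphi(\tilde\xi)$ and $\Phi(\mathtt1\xi)=\varphi(\xi)$, where $\tilde\xi$ swaps $\mathtt0,\mathtt1$. Via $\Phi:2^{\mathbb N}\to\mathbb{R}$ these maps induce homeomorphisms of $\mathbb{R}$. Under this identification, $x,x_{\mathtt1},y_{\mathtt{10}}$ are the maps $a(t)=t+1$, $b$ and $c$, where - $b(t)=t$ for $t\le0$, $t/(1-t)$ on $[0,1/2]$, $(3t-1)/t$ on $[1/2,1]$, and $t+1$ for $t\ge1$; - $c(t)=2t/(t+1)$ on $[0,1]$ and $t$ otherwise. $G_0$ is the group generated by all $x_{\mathtt s}$ and all $y_{\mathtt s}$ with $\mathtt s$ non-constant; it equals the group generated by $a,b,c$. *)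

(* Defs.v *)
From HB Require Import structures.
From mathcomp Require Import all_boot all_order all_algebra.
From mathcomp Require Import boolp classical_sets reals ereal Rstruct.
Set Implicit Arguments. Unset Strict Implicit. Unset Printing Implicit Defensive.
Import Order.TTheory GRing.Theory Num.Theory.

Definition Cantor := nat -> bool.

Definition shift (k : nat) (xi : Cantor) : Cantor := fun n => xi (k + n).

Definition map_eq (f g : Cantor -> Cantor) : Prop := forall xi n, f xi n = g xi n.

Definition xmap (xi : Cantor) : Cantor :=
  if xi 0 then (* 1ξ -> 11ξ *) (fun n => if n is m.+1 then xi m else true)
  else if xi 1 then (* 01ξ -> 10ξ *)
    (fun n => match n with 0 => true | 1 => false | _ => xi n end)
  else (* 00ξ -> 0ξ *) (fun n => if n is m.+1 then xi m.+2 else false).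

Definition xinv (xi : Cantor) : Cantor :=
  if ~~ xi 0 then (* 0ξ -> 00ξ *) (fun n => if n is m.+1 then xi m else false)
  else if xi 1 then (* 11ξ -> 1ξ *) (fun n => if n is m.+1 then xi m.+2 else true)
  else (* 10ξ -> 01ξ *)
    (fun n => match n with 0 => false | 1 => true | _ => xi n end).

(* y and y^{-1}, defined by their mutual recursion; [inv = false] is y,
   [inv = true] is y^{-1}.  Every recursive step emits at least one output
   letter, so [fuel = n.+1] suffices to compute output letter n. *)
Fixpoint yout (fuel : nat) (inv : bool) (xi : Cantor) (n : nat) : bool :=
  match fuel with
  | 0 => false
  | f.+1 =>
    if ~~ inv then
      if xi 0 then (* y(1ξ) = 11 y(ξ) *)
        match n with 0 | 1 => true | m.+2 => yout f false (shift 1 xi) m end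
      else if xi 1 then (* y(01ξ) = 10 y^{-1}(ξ) *)
        match n with 0 => true | 1 => false | m.+2 => yout f true (shift 2 xi) m end
      else (* y(00ξ) = 0 y(ξ) *)
        match n with 0 => false | m.+1 => yout f false (shift 2 xi) m end
    else
      if ~~ xi 0 then (* y^{-1}(0ξ) = 00 y^{-1}(ξ) *)
        match n with 0 | 1 => false | m.+2 => yout f true (shift 1 xi) m end
      else if xi 1 then (* y^{-1}(11ξ) = 1 y^{-1}(ξ) *)
        match n with 0 => true | m.+1 => yout f true (shift 2 xi) m end
      else (* y^{-1}(10ξ) = 01 y(ξ) *)
        match n with 0 => false | 1 => true | m.+2 => yout f false (shift 2 xi) m end
  end.

Definition ymap (xi : Cantor) : Cantor := fun n => yout n.+1 false xi n.
Definition yinv (xi : Cantor) : Cantor := fun n => yout n.+1 true xi n.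

Definition has_prefix (s : seq bool) (xi : Cantor) : bool :=
  all (fun i => xi i == nth false s i) (iota 0 (size s)).

Definition localize (s : seq bool) (f : Cantor -> Cantor) (xi : Cantor) : Cantor :=
  if has_prefix s xi then
    (fun n => if n < size s then xi n else f (shift (size s) xi) (n - size s))
  else xi.

Definition constant_word (s : seq bool) : Prop :=
  exists n, s = nseq n false \/ s = nseq n true.

Inductive gen := GX of seq bool | GY of seq bool.

(* a letter is a generator together with an exponent flag: true = inverse *)
Definition letter := (gen * bool)%type.
Definition word := seq letter.

Definition letter_map (l : letter) : Cantor -> Cantor :=
  match l with
  | (GX s, false) => localize s xmap
  | (GX s, true)  => localize s xinv
  | (GY s, false) => localize s ymap
  | (GY s, true)  => localize s yinv
  end.

Definition letter_ok (l : letter) : Prop :=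
  match l.1 with GX _ => True | GY s => ~ constant_word s end.

Definition word_ok (w : word) : Prop := forall l, List.In l w -> letter_ok l.

(* the map represented by a word: w = l1 l2 ... lk  evaluates to l1 ∘ l2 ∘ ... ∘ lk *)
Definition word_eval (w : word) : Cantor -> Cantor :=
  foldr (fun l f => letter_map l \o f) id w.

Definition word_inv (w : word) : word := rev [seq (l.1, ~~ l.2) | l <- w].

Definition y_exponent (w : word) : int :=
  \sum_(l <- w) (match l with (GY _, false) => 1 | (GY _, true) => -1 | _ => 0 end)%R.

Definition inG0 (g : Cantor -> Cantor) : Prop :=
  exists w, word_ok w /\ map_eq (word_eval w) g.

Definition comm_word (u v : word) : word := word_inv u ++ word_inv v ++ u ++ v.

(* G_0': the subgroup generated by the commutators of elements of G_0, i.e.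
   the finite products of commutators (inverses of commutators are commutators). *)
Definition inG0' (g : Cantor -> Cantor) : Prop :=
  exists ps : seq (word * word),
    (forall p, List.In p ps -> word_ok p.1 /\ word_ok p.2) /\
    map_eq (word_eval (flatten [seq comm_word p.1 p.2 | p <- ps])) g.

Local Open Scope ring_scope.
Notation R := Rdefinitions.R.

(* The prefix ξ_0 ... ξ_{n-1} gives the Möbius map
   f_{ξ_0} ∘ ... ∘ f_{ξ_{n-1}}, with f_1(t) = 1 + t and f_0(t) = 1/(1+1/t),
   whose matrix is M_{ξ_0} ... M_{ξ_{n-1}}, M_1 = [[1,1],[0,1]],
   M_0 = [[1,0],[1,1]].  We keep its entries (a,b,c,d). *)
Fixpoint mob (n : nat) (xi : Cantor) : nat * nat * nat * nat :=
  match n with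
  | 0 => (1, 0, 0, 1)%N
  | m.+1 => let: (a, b, c, d) := mob m xi in
            if xi m then (a, a + b, c, c + d)%N else (a + b, b, c + d, d)%N
  end.

(* f_{ξ_0..ξ_{n-1}}(0) = b/d (note d >= 1) *)
Definition phi_approx (n : nat) (xi : Cantor) : R :=
  let: (_, b, _, d) := mob n xi in (b%:R / d%:R).

(* φ(ξ) = lim_n f_{ξ|n}(0) = sup_n f_{ξ|n}(0) (an increasing sequence), i.e. the
   solution of φ(0ξ) = 1/(1+1/φ(ξ)), φ(1ξ) = 1+φ(ξ); φ(1^∞) = +∞. *)
Definition phi (xi : Cantor) : \bar R :=
  ereal_sup [set (phi_approx n xi)%:E | n in [set: nat]].

Definition Phi (xi : Cantor) : \bar R :=
  if xi 0 then phi (shift 1 xi) else (- phi (fun n => ~~ xi n.+1))%E.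

(* g, as the homeomorphism of R induced via Phi (t = Phi ξ  ↦  Phi (g ξ)),
   has compact support: it is the identity outside some [-M, M]. *)
Definition compact_support (g : Cantor -> Cantor) : Prop :=
  exists M : R, forall xi, (M%:E < `|Phi xi|)%E -> Phi (g xi) = Phi xi.

(* Main.v *)
Require Import Defs.
From mathcomp Require Import all_boot all_order all_algebra.
From mathcomp Require Import boolp classical_sets reals ereal Rstruct.
From mathcomp Require Import zify.
Set Implicit Arguments. Unset Strict Implicit. Unset Printing Implicit Defensive.
Import Order.TTheory GRing.Theory Num.Theory.


Definition app (s : seq bool) (xi : Cantor) : Cantor :=
  fun n => if n < size s then nth false s n else xi (n - size s).

Lemma app_nil xi : app [::] xi = xi.
Proof. by apply: funext => n; rewrite /app ltn0 subn0. Qed.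

Lemma app_cat s t xi : app (s ++ t) xi = app s (app t xi).
Proof.
apply: funext => n; rewrite /app size_cat nth_cat.
case: (ltnP n (size s)) => h.
  by rewrite (leq_trans h (leq_addr _ _)).
have -> : (n < size s + size t) = (n - size s < size t) by lia.
by rewrite subnDA.
Qed.

Lemma app_cons0 b s xi : app (b :: s) xi 0 = b.
Proof. by []. Qed.

Lemma app_consS b s xi m : app (b :: s) xi m.+1 = app s xi m.
Proof. by rewrite /app /= ltnS subSS. Qed.

Lemma shift_app s xi : shift (size s) (app s xi) = xi.
Proof.
apply: funext => n; rewrite /shift /app.
have -> : (size s + n < size s) = false by lia.
by rewrite addKn.
Qed.

Lemma shift1_cons b s xi : shift 1 (app (b :: s) xi) = app s xi.
Proof. by rewrite -cat1s app_cat (shift_app [:: b]). Qed.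

Lemma app_inj s xi eta : app s xi = app s eta -> xi = eta.
Proof. by move=> h; rewrite -(shift_app s xi) h shift_app. Qed.

Lemma has_prefixP s xi : reflect (exists zeta, xi = app s zeta) (has_prefix s xi).
Proof.
apply: (iffP idP).
  move=> /allP h; exists (shift (size s) xi); apply: funext => n.
  rewrite /app /shift; case: ltnP => hn.
    by apply/eqP; apply: h; rewrite mem_iota.
  by rewrite subnKC.
move=> [z ->]; apply/allP => i; rewrite mem_iota add0n => /andP [_ hi].
by rewrite /app hi.
Qed.

Lemma has_prefix_app s xi : has_prefix s (app s xi).
Proof. by apply/has_prefixP; exists xi. Qed.

Lemma has_prefix_cat s t zeta :
  has_prefix (s ++ t) (app s zeta) = has_prefix t zeta.
Proof.
apply/has_prefixP/has_prefixP => [[th]|[th ->]].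
  by rewrite app_cat => /app_inj ->; exists th.
by exists th; rewrite app_cat.
Qed.

Lemma has_prefix_catl s t xi : has_prefix (s ++ t) xi -> has_prefix s xi.
Proof. by move=> /has_prefixP [z ->]; rewrite app_cat has_prefix_app. Qed.

Lemma localize_app s f xi : localize s f (app s xi) = app s (f xi).
Proof.
rewrite /localize has_prefix_app shift_app; apply: funext => n.
by rewrite /app; case: ltnP.
Qed.

Lemma localize_nop s f xi : ~~ has_prefix s xi -> localize s f xi = xi.
Proof. by rewrite /localize => /negbTE ->. Qed.

Lemma localize_cat r p f : localize (r ++ p) f = localize r (localize p f).
Proof.
apply: funext => xi.
case: (boolP (has_prefix r xi)) => [/has_prefixP [z ->]|hr].
  rewrite localize_app.
  case: (boolP (has_prefix p z)) => [/has_prefixP [t ->]|hp].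
    by rewrite -app_cat localize_app app_cat localize_app.
  rewrite (localize_nop _ hp) localize_nop //.
  by rewrite has_prefix_cat.
rewrite (localize_nop _ hr) localize_nop //.
by apply: contra hr; apply: has_prefix_catl.
Qed.

Lemma localize_comp s f g : localize s (f \o g) = localize s f \o localize s g.
Proof.
apply: funext => xi /=.
case: (boolP (has_prefix s xi)) => [/has_prefixP [z ->]|hr].
  by rewrite !localize_app.
by rewrite !(localize_nop _ hr).
Qed.

Lemma localize_id s : localize s id = id.
Proof.
apply: funext => xi /=.
case: (boolP (has_prefix s xi)) => [/has_prefixP [z ->]|hr].
  by rewrite !localize_app.
by rewrite !(localize_nop _ hr).
Qed.

Lemma localize_nil f : localize [::] f = f.
Proof. by apply: funext => xi; rewrite -{1}(app_nil xi) localize_app app_nil. Qed.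

Lemma cantor_dec xi : xi = app [:: xi 0] (shift 1 xi).
Proof.
apply: funext => -[|n]; first by [].
by rewrite app_consS /app ltn0 subn0 /shift.
Qed.



Lemma shift2_app b c z : shift 2 (app [:: b; c] z) = z.
Proof. exact: (shift_app [:: b; c] z). Qed.
Lemma shift1_app b z : shift 1 (app [:: b] z) = z.
Proof. exact: (shift_app [:: b] z). Qed.

Lemma cases_x xi : exists z, xi = app [:: true] z \/ xi = app [:: false; true] z
                                \/ xi = app [:: false; false] z.
Proof.
rewrite (cantor_dec xi); set z := shift 1 xi.
case: (xi 0).
  by exists z; left.
rewrite (cantor_dec z); set t := shift 1 z; exists t.
by rewrite -app_cat; case: (z 0); auto.
Qed.

Lemma cases_xi xi : exists z, xi = app [:: false] z \/ xi = app [:: true; true] z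
                                \/ xi = app [:: true; false] z.
Proof.
rewrite (cantor_dec xi); set z := shift 1 xi.
case: (xi 0); last by exists z; left.
rewrite (cantor_dec z); set t := shift 1 z; exists t.
by rewrite -app_cat; case: (z 0); auto.
Qed.

Ltac appsimp := rewrite ?app_consS ?app_cons0 ?app_nil.

Lemma xmap_1 z : xmap (app [:: true] z) = app [:: true; true] z.
Proof. rewrite /xmap app_cons0; apply: funext => -[|m] //; by appsimp. Qed.
Lemma xmap_01 z : xmap (app [:: false; true] z) = app [:: true; false] z.
Proof.
rewrite /xmap app_cons0 app_consS app_cons0 /=.
by apply: funext => -[|[|m]] //; appsimp.
Qed.
Lemma xmap_00 z : xmap (app [:: false; false] z) = app [:: false] z.
Proof.
rewrite /xmap app_cons0 app_consS app_cons0 /=.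
by apply: funext => -[|m] //; appsimp.
Qed.
Lemma xinv_0 z : xinv (app [:: false] z) = app [:: false; false] z.
Proof. rewrite /xinv app_cons0 /=; apply: funext => -[|m] //; by appsimp. Qed.
Lemma xinv_11 z : xinv (app [:: true; true] z) = app [:: true] z.
Proof.
rewrite /xinv app_cons0 app_consS app_cons0 /=.
by apply: funext => -[|m] //; appsimp.
Qed.
Lemma xinv_10 z : xinv (app [:: true; false] z) = app [:: false; true] z.
Proof.
rewrite /xinv app_cons0 app_consS app_cons0 /=.
by apply: funext => -[|[|m]] //; appsimp.
Qed.

Lemma xinvK xi : xinv (xmap xi) = xi.
Proof.
have [z [->|[->|->]]] := cases_x xi.
- by rewrite xmap_1 xinv_11.
- by rewrite xmap_01 xinv_10.
- by rewrite xmap_00 xinv_0.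
Qed.
Lemma xmapK xi : xmap (xinv xi) = xi.
Proof.
have [z [->|[->|->]]] := cases_xi xi.
- by rewrite xinv_0 xmap_00.
- by rewrite xinv_11 xmap_1.
- by rewrite xinv_10 xmap_01.
Qed.

Lemma yout_S f inv xi n : yout f.+1 inv xi n =
    if ~~ inv then
      if xi 0 then
        match n with 0 | 1 => true | m.+2 => yout f false (shift 1 xi) m end
      else if xi 1 then
        match n with 0 => true | 1 => false | m.+2 => yout f true (shift 2 xi) m end
      else
        match n with 0 => false | m.+1 => yout f false (shift 2 xi) m end
    else
      if ~~ xi 0 then
        match n with 0 | 1 => false | m.+2 => yout f true (shift 1 xi) m end
      else if xi 1 then
        match n with 0 => true | m.+1 => yout f true (shift 2 xi) m end
      else
        match n with 0 => false | 1 => true | m.+2 => yout f false (shift 2 xi) m end.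
Proof. by []. Qed.

Lemma yout_step f n inv xi : n < f -> yout f.+1 inv xi n = yout f inv xi n.
Proof.
elim: f n inv xi => [//|f IH] n inv xi hn.
rewrite [LHS]yout_S [RHS]yout_S.
case: inv; case: (xi 0); case: (xi 1); case: n hn => [|[|m]] hn; cbn -[yout shift] => //;
  rewrite IH //; lia.
Qed.

Lemma yout_fuel f n inv xi : n < f -> yout f inv xi n = yout n.+1 inv xi n.
Proof.
elim: f => [//|f IH] hn.
case: (ltnP n f) => h.
  by rewrite yout_step // IH.
by have -> : f = n by lia.
Qed.

Ltac ysolve := apply: funext => -[|[|m]]; rewrite /ymap /yinv yout_S ?app_cons0 ?app_consS ?app_cons0;
  cbn -[yout shift app] => //;
  rewrite ?shift1_app ?shift2_app ?app_consS ?app_nil ?app_cons0 yout_fuel; try lia.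

Lemma ymap_1 z : ymap (app [:: true] z) = app [:: true; true] (ymap z).
Proof. ysolve. Qed.
Lemma ymap_01 z : ymap (app [:: false; true] z) = app [:: true; false] (yinv z).
Proof. ysolve. Qed.
Lemma ymap_00 z : ymap (app [:: false; false] z) = app [:: false] (ymap z).
Proof. ysolve. Qed.
Lemma yinv_0 z : yinv (app [:: false] z) = app [:: false; false] (yinv z).
Proof. ysolve. Qed.
Lemma yinv_11 z : yinv (app [:: true; true] z) = app [:: true] (yinv z).
Proof. ysolve. Qed.
Lemma yinv_10 z : yinv (app [:: true; false] z) = app [:: false; true] (ymap z).
Proof. ysolve. Qed.

Lemma y_inv_both n : forall xi, ymap (yinv xi) n = xi n /\ yinv (ymap xi) n = xi n.
Proof.
elim/ltn_ind: n => n IH xi; split.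
- have [z [->|[->|->]]] := cases_xi xi.
  + rewrite yinv_0 ymap_00; case: n IH => [|m] IH //; rewrite !app_consS !app_nil.
    by case: (IH m (ltnSn m) z).
  + rewrite yinv_11 ymap_1; case: n IH => [|[|m]] IH //; rewrite !app_consS !app_nil.
    by case: (IH m (ltnW (ltnSn m.+1)) z).
  + rewrite yinv_10 ymap_01; case: n IH => [|[|m]] IH //; rewrite !app_consS !app_nil.
    by case: (IH m (ltnW (ltnSn m.+1)) z).
- have [z [->|[->|->]]] := cases_x xi.
  + rewrite ymap_1 yinv_11; case: n IH => [|m] IH //; rewrite !app_consS !app_nil.
    by case: (IH m (ltnSn m) z).
  + rewrite ymap_01 yinv_10; case: n IH => [|[|m]] IH //; rewrite !app_consS !app_nil.
    by case: (IH m (ltnW (ltnSn m.+1)) z).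
  + rewrite ymap_00 yinv_0; case: n IH => [|[|m]] IH //; rewrite !app_consS !app_nil.
    by case: (IH m (ltnW (ltnSn m.+1)) z).
Qed.

Lemma ymapK xi : ymap (yinv xi) = xi.
Proof. by apply: funext => n; case: (y_inv_both n xi). Qed.
Lemma yinvK xi : yinv (ymap xi) = xi.
Proof. by apply: funext => n; case: (y_inv_both n xi). Qed.



Lemma localize_K s f g : (forall x, f (g x) = x) ->
  forall xi, localize s f (localize s g xi) = xi.
Proof.
move=> h xi; case: (boolP (has_prefix s xi)) => [/has_prefixP [z ->]|hr].
  by rewrite !localize_app h.
by rewrite !(localize_nop _ hr).
Qed.

Definition inv_letter (l : letter) : letter := (l.1, ~~ l.2).

Lemma letter_invl l xi : letter_map (inv_letter l) (letter_map l xi) = xi.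
Proof.
case: l => [[s|s] [|]] /=; apply: localize_K;
  [exact: xmapK|exact: xinvK|exact: ymapK|exact: yinvK].
Qed.

Lemma inv_letterK l : inv_letter (inv_letter l) = l.
Proof. by case: l => a b; rewrite /inv_letter /= negbK. Qed.

Lemma letter_invr l xi : letter_map l (letter_map (inv_letter l) xi) = xi.
Proof. by rewrite -{1}(inv_letterK l) letter_invl. Qed.

Lemma word_eval_cat a b : word_eval (a ++ b) = word_eval a \o word_eval b.
Proof. by elim: a => [|l a IH] //=; rewrite IH. Qed.

Lemma word_eval_catE a b xi : word_eval (a ++ b) xi = word_eval a (word_eval b xi).
Proof. by rewrite word_eval_cat. Qed.

Lemma word_eval_cons l w xi : word_eval (l :: w) xi = letter_map l (word_eval w xi).
Proof. by []. Qed.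

Lemma word_eval_nil xi : word_eval [::] xi = xi.
Proof. by []. Qed.

Lemma word_inv_cat a b : word_inv (a ++ b) = word_inv b ++ word_inv a.
Proof. by rewrite /word_inv map_cat rev_cat. Qed.

Lemma word_inv_cons l w : word_inv (l :: w) = word_inv w ++ [:: inv_letter l].
Proof. by rewrite /word_inv /= rev_cons cats1. Qed.

Lemma word_invK w : word_inv (word_inv w) = w.
Proof.
rewrite /word_inv map_rev revK -map_comp.
rewrite -[RHS]map_id; apply: eq_map => -[a b] /=; by rewrite negbK.
Qed.

Lemma eval_invl w xi : word_eval (word_inv w) (word_eval w xi) = xi.
Proof.
elim: w xi => [|l w IH] xi //.
by rewrite word_inv_cons word_eval_catE word_eval_cons word_eval_cons
  word_eval_nil letter_invl IH.
Qed.

Lemma eval_invr w xi : word_eval w (word_eval (word_inv w) xi) = xi.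
Proof. by rewrite -{1}(word_invK w) eval_invl. Qed.

Lemma word_ok_nil : word_ok [::].
Proof. by move=> l. Qed.

Lemma word_ok_cons l w : word_ok (l :: w) <-> letter_ok l /\ word_ok w.
Proof.
split.
  by move=> h; split; [apply: h; left|move=> l' hl; apply: h; right].
by move=> [h1 h2] l' /= [<-|hl] //; apply: h2.
Qed.

Lemma word_ok_cat a b : word_ok (a ++ b) <-> word_ok a /\ word_ok b.
Proof.
elim: a => [|l a IH] /=.
  by split => [h|[]]; [split; first exact: word_ok_nil|].
rewrite !word_ok_cons IH; tauto.
Qed.

Lemma letter_ok_inv l : letter_ok (inv_letter l) <-> letter_ok l.
Proof. by case: l. Qed.

Lemma word_ok_inv w : word_ok w -> word_ok (word_inv w).
Proof.
elim: w => [|l w IH] /=; first by move=> _; exact: word_ok_nil.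
rewrite word_ok_cons word_inv_cons word_ok_cat => -[h1 h2]; split; first exact: IH.
by apply/word_ok_cons; split; [apply/letter_ok_inv|exact: word_ok_nil].
Qed.

Definition comms (ps : seq (word * word)) : word :=
  flatten [seq comm_word p.1 p.2 | p <- ps].

Fixpoint okps (ps : seq (word * word)) : Prop :=
  match ps with [::] => True | p :: ps => (word_ok p.1 /\ word_ok p.2) /\ okps ps end.

Lemma okpsE ps : okps ps <-> (forall p, List.In p ps -> word_ok p.1 /\ word_ok p.2).
Proof.
elim: ps => [|p ps IH] /=; first by split.
rewrite IH; split.
  by move=> [h1 h2] q [<-|hq] //; apply: h2.
by move=> h; split; [apply: h; left|move=> q hq; apply: h; right].
Qed.

Lemma okps_cat a b : okps (a ++ b) <-> okps a /\ okps b.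
Proof. elim: a => [|p a IH] /=; [tauto|rewrite IH; tauto]. Qed.

Definition inS (f : Cantor -> Cantor) :=
  exists ps, okps ps /\ f = word_eval (comms ps).

Lemma inG0'E g : inG0' g <-> inS g.
Proof.
split.
  move=> [ps [h1 h2]]; exists ps; split; first by apply/okpsE.
  by apply: funext => xi; apply: funext => n; rewrite h2.
by move=> [ps [h1 ->]]; exists ps; split; [apply/okpsE|].
Qed.

Lemma comms_cat a b : comms (a ++ b) = comms a ++ comms b.
Proof. by rewrite /comms map_cat flatten_cat. Qed.

Lemma inS_id : inS id.
Proof. by exists [::]. Qed.

Lemma inS_comp f g : inS f -> inS g -> inS (f \o g).
Proof.
move=> [a [ha ->]] [b [hb ->]]; exists (a ++ b); split.
  by apply/okps_cat.
by rewrite comms_cat word_eval_cat.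
Qed.

Lemma inS_comm u v : word_ok u -> word_ok v -> inS (word_eval (comm_word u v)).
Proof.
move=> hu hv; exists [:: (u, v)]; split => //.
by rewrite /comms /= cats0.
Qed.

Lemma word_inv_comm u v : word_inv (comm_word u v) = comm_word v u.
Proof. by rewrite /comm_word !word_inv_cat !word_invK -!catA. Qed.

Lemma word_inv_comms ps :
  word_inv (comms ps) = comms (rev [seq (p.2, p.1) | p <- ps]).
Proof.
elim: ps => [|p ps IH] //=.
have -> : comms (p :: ps) = comm_word p.1 p.2 ++ comms ps by [].
rewrite word_inv_cat IH word_inv_comm rev_cons -cats1.
by rewrite comms_cat /comms /= cats0.
Qed.

Lemma okps_rev ps : okps ps -> okps (rev [seq (p.2, p.1) | p <- ps]).
Proof.
elim: ps => [|p ps IH] //= [[h1 h2] h3].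
by rewrite rev_cons -cats1; apply/okps_cat; split; [apply: IH|].
Qed.

Lemma inS_inv f f' : inS f -> (forall xi, f (f' xi) = xi) -> inS f'.
Proof.
move=> [ps [hps ->]] h; exists (rev [seq (p.2, p.1) | p <- ps]); split.
  exact: okps_rev.
rewrite -word_inv_comms; apply: funext => xi.
transitivity (word_eval (word_inv (comms ps)) (word_eval (comms ps) (f' xi))).
  by rewrite eval_invl.
by rewrite h.
Qed.

Definition conjp (h : word) (p : word * word) := (h ++ p.1 ++ word_inv h, h ++ p.2 ++ word_inv h).

Lemma eval_conj_comm h u v xi :
  word_eval (comm_word (h ++ u ++ word_inv h) (h ++ v ++ word_inv h)) xi =
  word_eval h (word_eval (comm_word u v) (word_eval (word_inv h) xi)).
Proof.
rewrite /comm_word !word_inv_cat !word_invK -!catA !word_eval_catE.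
by rewrite !eval_invl.
Qed.

Lemma inS_conj h f : word_ok h -> inS f ->
  inS (word_eval h \o f \o word_eval (word_inv h)).
Proof.
move=> hh [ps [hps ->]]; exists (map (conjp h) ps); split.
  elim: ps hps => [|p ps IH] //= [[h1 h2] h3]; split; last exact: IH.
  by split; apply/word_ok_cat; split => //; apply/word_ok_cat; split => //;
     apply: word_ok_inv.
apply: funext => xi /=; symmetry.
elim: ps {hps} xi => [|[u v] ps IH] xi /=.
  by rewrite /comms /= eval_invr.
have -> : comms ((u, v) :: ps) = comm_word u v ++ comms ps by [].
have -> : comms (conjp h (u, v) :: map (conjp h) ps) =
   comm_word (h ++ u ++ word_inv h) (h ++ v ++ word_inv h) ++ comms (map (conjp h) ps) by [].
rewrite !word_eval_catE IH.
by rewrite !word_inv_cat !word_invK !word_eval_catE !eval_invl.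
Qed.

Lemma inS_conj' h f : word_ok h -> inS f ->
  inS (word_eval (word_inv h) \o f \o word_eval h).
Proof.
move=> hh hf; have := inS_conj (word_ok_inv hh) hf; by rewrite word_invK.
Qed.



Definition nonconst (s : seq bool) := (false \in s) && (true \in s).

Lemma nonconstP s : ~ constant_word s <-> nonconst s.
Proof.
split.
  move=> h; rewrite /nonconst; case: (boolP (false \in s)) => hf /=.
    case: (boolP (true \in s)) => ht //; exfalso; apply: h; exists (size s); left.
    apply/all_pred1P/allP => x hx; case: x hx => //= hx; by rewrite hx in ht.
  exfalso; apply: h; exists (size s); right.
  apply/all_pred1P/allP => x hx; case: x hx => //= hx; by rewrite hx in hf.
move=> /andP [hf ht] [n [e|e]]; rewrite e in hf ht.
  by rewrite mem_nseq in ht; case/andP: ht.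
by rewrite mem_nseq in hf; case/andP: hf.
Qed.

Definition lift_gen (p : seq bool) (g : gen) :=
  match g with GX s => GX (p ++ s) | GY s => GY (p ++ s) end.
Definition liftw p (h : word) : word := [seq (lift_gen p l.1, l.2) | l <- h].

Lemma letter_map_lift p l : letter_map (lift_gen p l.1, l.2) = localize p (letter_map l).
Proof. by case: l => [[s|s] [|]]; rewrite /= localize_cat. Qed.

Lemma eval_liftw p h : word_eval (liftw p h) = localize p (word_eval h).
Proof.
elim: h => [|l h IH]; first by rewrite /= localize_id.
have -> : word_eval (liftw p (l :: h)) = letter_map (lift_gen p l.1, l.2) \o word_eval (liftw p h) by [].
by rewrite IH (letter_map_lift p l) -localize_comp.
Qed.

Lemma liftw_inv p h : word_inv (liftw p h) = liftw p (word_inv h).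
Proof. by rewrite /word_inv /liftw map_rev -!map_comp. Qed.

Lemma ok_liftw p h : word_ok h -> word_ok (liftw p h).
Proof.
elim: h => [|l h IH] /=; first by move=> _; exact: word_ok_nil.
rewrite !word_ok_cons => -[h1 h2]; split; last exact: IH.
move: h1; case: l => [[s|s] b] //= /nonconstP hh; apply/nonconstP.
by move: hh; rewrite /nonconst !mem_cat => /andP [-> ->]; rewrite !orbT.
Qed.

Definition Conj p q := exists h, word_ok h /\
  forall f, word_eval h \o localize p f \o word_eval (word_inv h) = localize q f.

Lemma Conj_refl p : Conj p p.
Proof.
exists [::]; split; first exact: word_ok_nil.
by move=> f; apply: funext.
Qed.

Lemma Conj_trans p q r : Conj p q -> Conj q r -> Conj p r.
Proof.
move=> [h1 [ok1 e1]] [h2 [ok2 e2]]; exists (h2 ++ h1); split.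
  by apply/word_ok_cat.
move=> f; rewrite -e2 -e1; apply: funext => xi /=.
by rewrite word_inv_cat !word_eval_catE.
Qed.

Lemma Conj_sym p q : Conj p q -> Conj q p.
Proof.
move=> [h [ok e]]; exists (word_inv h); split; first exact: word_ok_inv.
move=> f; rewrite -e; apply: funext => xi /=.
by rewrite word_invK !eval_invl.
Qed.

Lemma Conj_lift r p q : Conj p q -> Conj (r ++ p) (r ++ q).
Proof.
move=> [h [ok e]]; exists (liftw r h); split; first exact: ok_liftw.
move=> f; rewrite liftw_inv !eval_liftw !localize_cat -e.
by rewrite -!localize_comp.
Qed.

Lemma Conj_of_prefix h p q : word_ok h ->
  (forall xi, word_eval h (app p xi) = app q xi) -> Conj p q.
Proof.
move=> ok e; exists h; split => // f; apply: funext => eta /=.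
case: (boolP (has_prefix q eta)) => [/has_prefixP [z ->]|hq].
  by rewrite -e eval_invl localize_app !e localize_app.
rewrite (localize_nop _ hq) localize_nop ?eval_invr //.
apply/negP => /has_prefixP [z ez]; move: hq.
by rewrite -(eval_invr h eta) ez e has_prefix_app.
Qed.

Definition hx : word := [:: (GX [::], false)].
Lemma hx_ok : word_ok hx.
Proof. by apply/word_ok_cons; split => //; exact: word_ok_nil. Qed.
Lemma eval_hx xi : word_eval hx xi = xmap xi.
Proof. by rewrite /= localize_nil. Qed.

Lemma R1 r : Conj ([:: false; true] ++ r) ([:: true; false] ++ r).
Proof.
apply: (Conj_of_prefix hx_ok) => xi.
by rewrite eval_hx !app_cat xmap_01.
Qed.
Lemma R2 r : Conj ([:: true] ++ r) ([:: true; true] ++ r).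
Proof.
apply: (Conj_of_prefix hx_ok) => xi.
by rewrite eval_hx !app_cat xmap_1.
Qed.
Lemma R3 r : Conj ([:: false; false] ++ r) ([:: false] ++ r).
Proof.
apply: (Conj_of_prefix hx_ok) => xi.
by rewrite eval_hx !app_cat xmap_00.
Qed.

Lemma Conj_ones k : Conj (nseq k.+1 true) [:: true].
Proof.
elim: k => [|k IH]; first exact: Conj_refl.
apply: Conj_trans IH; exact: (Conj_sym (R2 (nseq k true))).
Qed.

Lemma Conj_zeros k : Conj (nseq k.+1 false) [:: false].
Proof.
elim: k => [|k IH]; first exact: Conj_refl.
apply: Conj_trans IH; exact: (R3 (nseq k false)).
Qed.

Lemma nc01 k : nonconst (false :: true :: nseq k true).
Proof. rewrite /nonconst !inE eqxx /=. exact isT. Qed.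
Lemma nc10 k : nonconst (true :: false :: nseq k false).
Proof. rewrite /nonconst !inE eqxx /=. exact isT. Qed.

Lemma Conj_nonconst s : nonconst s -> Conj s [:: false; true].
Proof.
have [n] := ubnP (size s); elim: n s => // n IH s hs hnc.
case: s hs hnc => [|a t] hs hnc; first by case/andP: hnc.
case: (boolP (nonconst t)) => ht.
  have c1 : Conj (a :: t) [:: a; false; true].
    exact: (Conj_lift [:: a] (IH t hs ht)).
  apply: Conj_trans c1 _; case: a {hnc hs}.
    apply: Conj_trans (Conj_sym (R1 [:: true])) _.
    exact: (Conj_lift [:: false] (Conj_sym (R2 [::]))).
  exact: (R3 [:: true]).
move: hnc ht; rewrite /nonconst !inE => hnc ht.
have [hf|ht']: (false \notin t) \/ (true \notin t).
  by move: ht; case: (false \in t); case: (true \in t); auto.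
-
  have et : t = nseq (size t) true.
    apply/all_pred1P/allP => x hx; case: x hx => //= hx; by rewrite hx in hf.
  have ea : a = false by move: hnc hf; case: a {hs}; case: (false \in t).
  subst a.
  case: (size t) et => [|[|k]] et; rewrite et in hs hnc *.
  + by move: hnc; rewrite /= ?inE /=; case.
  + exact: Conj_refl.
  apply: Conj_trans (Conj_lift [:: false] (Conj_sym (R2 (nseq k true)))) _.
  apply: IH; first by move: hs => /=; lia.
  exact: nc01.
-
  have et : t = nseq (size t) false.
    apply/all_pred1P/allP => x hx; case: x hx => //= hx; by rewrite hx in ht'.
  have ea : a = true by move: hnc ht'; case: a {hs}; case: (true \in t).
  subst a.
  case: (size t) et => [|[|k]] et; rewrite et in hs hnc *.
  + by move: hnc; rewrite /= ?inE /=; case.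
  + exact: (Conj_sym (R1 [::])).
  apply: Conj_trans (Conj_lift [:: true] (R3 (nseq k false))) _.
  apply: IH; first by move: hs => /=; lia.
  exact: nc10.
Qed.



Lemma app1 b s z : app [:: b] (app s z) = app (b :: s) z.
Proof. by rewrite -app_cat. Qed.
Lemma xmap_1s s z : xmap (app (true :: s) z) = app (true :: true :: s) z.
Proof. by rewrite -app1 xmap_1 -app_cat. Qed.
Lemma xmap_01s s z : xmap (app (false :: true :: s) z) = app (true :: false :: s) z.
Proof. by rewrite (_ : false :: true :: s = [:: false; true] ++ s) // app_cat xmap_01 -app_cat. Qed.
Lemma xmap_00s s z : xmap (app (false :: false :: s) z) = app (false :: s) z.
Proof. by rewrite (_ : false :: false :: s = [:: false; false] ++ s) // app_cat xmap_00 -app_cat. Qed.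
Lemma loc_eq b f s z : localize [:: b] f (app (b :: s) z) = app [:: b] (f (app s z)).
Proof. by rewrite -app1 localize_app. Qed.
Lemma loc_neq b c f s z : b != c -> localize [:: b] f (app (c :: s) z) = app (c :: s) z.
Proof.
move=> h; rewrite localize_nop //; apply/negP => /has_prefixP [t e].
have := congr1 (fun x => x 0) e; rewrite !app_cons0 => ec; by rewrite ec eqxx in h.
Qed.
Lemma loc10 f s z : localize [:: true] f (app (false :: s) z) = app (false :: s) z.
Proof. exact: loc_neq. Qed.
Lemma loc01 f s z : localize [:: false] f (app (true :: s) z) = app (true :: s) z.
Proof. exact: loc_neq. Qed.

Lemma cases4 xi : exists z, xi = app [:: true] z \/ xi = app [:: false; true] z \/
   xi = app [:: false; false; true] z \/ xi = app [:: false; false; false] z.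
Proof.
have [z [->|[->|->]]] := cases_x xi; first by exists z; left.
  by exists z; right; left.
rewrite (cantor_dec z); exists (shift 1 z); rewrite -app_cat; case: (z 0) => /=; auto.
Qed.

Ltac xnorm := rewrite ?xmap_1s ?xmap_01s ?xmap_00s ?loc_eq ?loc10 ?loc01 ?app_nil ?app1.

Lemma x2rel xi : xmap (xmap xi) = localize [:: true] xmap (xmap (localize [:: false] xmap xi)).
Proof.
have [z [->|[->|[->|->]]]] := cases4 xi.
- rewrite loc01 !xmap_1s loc_eq xmap_1s. by rewrite app1.
- by do 4 xnorm.
- by do 4 xnorm.
- by do 4 xnorm.
Qed.

Lemma conj_gen (u h : word) (G : Cantor -> Cantor) :
  word_ok u -> word_ok h ->
  G = word_eval h \o word_eval u \o word_eval (word_inv h) ->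
  exists c, inS c /\ G = word_eval u \o c.
Proof.
move=> hu hh ->; exists (word_eval (comm_word u (word_inv h))); split.
  exact: inS_comm (word_ok_inv hh).
apply: funext => xi /=.
by rewrite /comm_word word_invK !word_eval_catE eval_invr.
Qed.

Lemma conj_loc p q F (u : word) : Conj p q -> word_ok u ->
  word_eval u = localize p F -> exists c, inS c /\ localize q F = localize p F \o c.
Proof.
move=> [h [hh e]] hu eu; rewrite -eu; apply: conj_gen hu hh _.
by rewrite eu e.
Qed.

Definition x0l : letter := (GX [:: false], false).
Definition x1l : letter := (GX [:: true], false).
Definition xl : letter := (GX [::], false).
Definition y01l : letter := (GY [:: false; true], false).

Lemma nc_01 : nonconst [:: false; true].
Proof. rewrite /nonconst !inE eqxx /=. exact isT. Qed.

Lemma ok1 l : letter_ok l -> word_ok [:: l].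
Proof. by move=> h; apply/word_ok_cons; split => //; exact: word_ok_nil. Qed.

Lemma y01l_ok : letter_ok y01l.
Proof. by apply/nonconstP; exact: nc_01. Qed.

Definition sp (g : gen) : word :=
  match g with
  | GX s => if s is [::] then [:: x1l; x0l]
            else if all (pred1 false) s then [:: x0l]
            else if all (pred1 true) s then [:: x1l] else [::]
  | GY _ => [:: y01l]
  end.

Definition subst1 (l : letter) : word := if l.2 then word_inv (sp l.1) else sp l.1.

Lemma sp_ok g : word_ok (sp g).
Proof.
case: g => [[|b s]|s] /=.
- by apply/word_ok_cons; split => //; apply: ok1.
- case: ifP => _; first exact: ok1.
  case: ifP => _; first exact: ok1.
  exact: word_ok_nil.
- exact: (ok1 y01l_ok).
Qed.

Lemma subst1_ok l : word_ok (subst1 l).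
Proof. rewrite /subst1; case: ifP => _; [apply: word_ok_inv|]; exact: sp_ok. Qed.

Lemma inS_xs s : nonconst s -> inS (localize s xmap).
Proof.
move=> hs.
have ncb b : nonconst (s ++ [:: b]).
  by move: hs; rewrite /nonconst !mem_cat => /andP [-> ->].
have cb b : Conj s (s ++ [:: b]).
  exact: Conj_trans (Conj_nonconst hs) (Conj_sym (Conj_nonconst (ncb b))).
have hu : word_ok [:: (GX s, false)] by apply: ok1.
have eu : word_eval [:: (GX s, false)] = localize s xmap by [].
have [c0 [hc0 e0]] := conj_loc (cb false) hu eu.
have [c1 [hc1 e1]] := conj_loc (cb true) hu eu.
have R : localize s (xmap \o xmap) =
         localize s (localize [:: true] xmap \o xmap \o localize [:: false] xmap).
  by congr localize; apply: funext => xi /=; rewrite x2rel.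
rewrite !localize_comp -!localize_cat e0 e1 in R.
set X := localize s xmap in R e0 e1 eu *.
set Xi := localize s xinv.
have XK y : Xi (X y) = y by apply: localize_K; exact: xinvK.
have XK' y : X (Xi y) = y by apply: localize_K; exact: xmapK.
have key xi : X xi = c1 (X (X (c0 xi))).
  have := congr1 (fun f => Xi (f xi)) R; by rewrite /= !XK.
case: hc0 => [ps0 [ok0 ec0]]; case: hc1 => [ps1 [ok1' ec1]].
set W0 := comms ps0 in ec0; set W1 := comms ps1 in ec1.
have i0 : inS (word_eval (word_inv W0)).
  apply: inS_inv (ex_intro _ ps0 (conj ok0 ec0)) _ => xi.
  by rewrite ec0 eval_invr.
have i1 : inS (word_eval (word_inv W1)).
  apply: inS_inv (ex_intro _ ps1 (conj ok1' ec1)) _ => xi.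
  by rewrite ec1 eval_invr.
have := inS_comp i1 (inS_conj hu i0).
congr inS; apply: funext => eta /=.
rewrite -/Xi -/X key ec0 eval_invr XK' ec1 eval_invl. by [].
Qed.

Lemma x_rel : exists c, inS c /\ letter_map xl = word_eval (sp (GX [::])) \o c.
Proof.
exists (word_eval (comm_word [:: x0l] [:: (GX [::], true)])); split.
  by apply: inS_comm; apply: ok1.
apply: funext => xi /=.
rewrite !localize_nil (localize_K [:: false] xmapK).
by rewrite -x2rel xmapK.
Qed.

Lemma allnc (s : seq bool) : ~~ all (pred1 false) s -> ~~ all (pred1 true) s -> nonconst s.
Proof.
move=> /allPn [x hx /= hx1] /allPn [y hy /= hy1].
rewrite /nonconst; case: x hx hx1 => // hx _; case: y hy hy1 => // hy _.
by rewrite hx hy.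
Qed.

Lemma all_nseqE (b : bool) (s : seq bool) : all (pred1 b) s -> s = nseq (size s) b.
Proof. by move=> /all_pred1P. Qed.

Lemma letter_pos g : letter_ok (g, false) ->
  exists c, inS c /\ letter_map (g, false) = word_eval (sp g) \o c.
Proof.
case: g => [s|s] /= hok.
- case: s hok => [|b t] hok; first exact: x_rel.
  case: ifP => hf.
    have e := all_nseqE hf; rewrite e /=.
    have := conj_loc (u := [:: x0l]) (F := xmap) (Conj_sym (Conj_zeros (size t)))
       (ok1 (l := x0l) I) erefl.
    by move=> [c [h1 h2]]; exists c; split.
  case: ifP => ht.
    have e := all_nseqE ht; rewrite e /=.
    have := conj_loc (u := [:: x1l]) (F := xmap) (Conj_sym (Conj_ones (size t)))
       (ok1 (l := x1l) I) erefl.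
    by move=> [c [h1 h2]]; exists c; split.
  exists (localize (b :: t) xmap); split; last by apply: funext.
  by apply: inS_xs; apply: allnc; rewrite ?hf ?ht.
- have hs : nonconst s by apply/nonconstP.
  exact (conj_loc (u := [:: y01l]) (F := ymap)
    (Conj_sym (Conj_nonconst hs)) (ok1 y01l_ok) erefl).
Qed.

Lemma inS_evalinv W : inS (word_eval W) -> inS (word_eval (word_inv W)).
Proof. by move=> h; apply: inS_inv h _ => xi; rewrite eval_invr. Qed.

Lemma inS_eval f : inS f -> exists W, f = word_eval W.
Proof. by move=> [ps [_ ->]]; exists (comms ps). Qed.

Lemma letter_sub l : letter_ok l ->
  exists c, inS c /\ letter_map l = word_eval (subst1 l) \o c.
Proof.
case: l => g [|] hok; last exact: letter_pos.
have hok' : letter_ok (g, false) by [].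
have [c [hc ec]] := letter_pos hok'.
have [W eW] := inS_eval hc; subst c.
exists (word_eval (sp g) \o word_eval (word_inv W) \o word_eval (word_inv (sp g))).
split; first exact (inS_conj (@sp_ok g) (inS_evalinv hc)).
apply: funext => eta /=.
rewrite eval_invl.
set z := word_eval (word_inv W) (word_eval (word_inv (sp g)) eta).
have hz : letter_map (g, false) z = eta.
  by rewrite ec /= /z eval_invr eval_invr.
rewrite -hz; exact: (letter_invl (g, false) z).
Qed.

Definition substw (w : word) : word := flatten (map subst1 w).

Lemma substw_ok w : word_ok (substw w).
Proof.
elim: w => [|l w IH] /=; first exact: word_ok_nil.
by apply/word_ok_cat; split; [exact: subst1_ok|].
Qed.

Lemma subst_eval w : word_ok w ->
  exists c, inS c /\ word_eval w = word_eval (substw w) \o c.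
Proof.
elim: w => [|l w IH] /=.
  by move=> _; exists id; split; [exact: inS_id|apply: funext].
move=> /word_ok_cons [hl hw].
have [cl [hcl el]] := letter_sub hl.
have [cw [hcw ew]] := IH hw.
exists ((word_eval (word_inv (substw w)) \o cl \o word_eval (substw w)) \o cw).
split.
  exact (inS_comp (inS_conj' (@substw_ok w) hcl) hcw).
apply: funext => xi /=.
by rewrite ew el word_eval_catE /= eval_invr.
Qed.

Definition gcode (g : gen) : bool * seq bool :=
  match g with GX s => (false, s) | GY s => (true, s) end.
Lemma gcode_inj : injective gcode.
Proof. by move=> [s|s] [t|t] /= [] // ->. Qed.

Definition sgn (b : bool) : int := if b then (-1)%R else 1%R.
Definition dl (gg : gen) (l : letter) : int :=
  if gcode l.1 == gcode gg then sgn l.2 else 0%R.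
Definition netexp (gg : gen) (w : word) : int := (\sum_(l <- w) dl gg l)%R.

Lemma netexp_cat gg a b : netexp gg (a ++ b) = (netexp gg a + netexp gg b)%R.
Proof. by rewrite /netexp big_cat. Qed.
Lemma netexp_cons gg l w : netexp gg (l :: w) = (dl gg l + netexp gg w)%R.
Proof. by rewrite /netexp big_cons. Qed.
Lemma netexp_nil gg : netexp gg [::] = 0%R.
Proof. by rewrite /netexp big_nil. Qed.
Lemma dl_inv gg l : dl gg (inv_letter l) = (- dl gg l)%R.
Proof. by case: l => g [|]; rewrite /dl /=; case: ifP. Qed.
Lemma netexp_inv gg w : netexp gg (word_inv w) = (- netexp gg w)%R.
Proof.
elim: w => [|l w IH]; first by rewrite /word_inv /= netexp_nil oppr0.
rewrite word_inv_cons netexp_cat IH netexp_cons netexp_cons netexp_nil dl_inv.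
by rewrite addr0 opprD addrC.
Qed.

Lemma dl_self l : dl l.1 l = sgn l.2.
Proof. by rewrite /dl eqxx. Qed.

Lemma nohas_sign (g : gen) (b : bool) w :
  ~~ has (fun l' : letter => (gcode l'.1 == gcode g) && (l'.2 == ~~ b)) w ->
  (0 <= sgn b * netexp g w)%R.
Proof.
elim: w => [|l w IH] /=; first by rewrite netexp_nil mulr0.
rewrite negb_or => /andP [h1 h2]; rewrite netexp_cons mulrDr.
apply: addr_ge0; last exact: IH.
clear IH h2.
rewrite /dl; case: ifP => e; last by rewrite mulr0.
move: h1; rewrite e /=; case: (l.2); case: b => //=.
Qed.

Lemma zero_sum w : word_ok w -> (forall gg, netexp gg w = 0%R) -> inS (word_eval w).
Proof.
have [n] := ubnP (size w); elim: n w => // n IH w hs hok hz.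
case: w hs hok hz => [|l w'] hs hok hz.
  have -> : word_eval [::] = id by apply: funext.
  exact: inS_id.
move/word_ok_cons: hok => [hl hw'].
set P := fun l' : letter => (gcode l'.1 == gcode l.1) && (l'.2 == ~~ l.2).
have hP : has P w'.
  apply/negPn/negP => hn.
  have := nohas_sign hn; have := hz l.1; rewrite netexp_cons dl_self.
  by case: (l.2) => /=; lia.
set d : letter := (GX [::], false).
set i := find P w'.
have hi : i < size w' by rewrite -has_find.
have Pi : P (nth d w' i) by apply: nth_find.
have el : nth d w' i = inv_letter l.
  move: Pi; rewrite /P; case: (nth d w' i) => g b /= /andP [/eqP /gcode_inj -> /eqP ->].
  by [].
have ew : w' = take i w' ++ inv_letter l :: drop i.+1 w'.
  by rewrite -el -drop_nth // cat_take_drop.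
set a := take i w'; set b := drop i.+1 w'.
rewrite -/a -/b in ew.
have hab : word_ok a /\ word_ok (inv_letter l :: b).
  by apply/word_ok_cat; rewrite -ew.
case: hab => ha /word_ok_cons [hil hb].
have IHab : inS (word_eval (a ++ b)).
  apply: IH.
  - by move: hs; rewrite ew /= size_cat /= size_cat; lia.
  - by apply/word_ok_cat.
  - move=> gg; have := hz gg; rewrite ew netexp_cons !netexp_cat netexp_cons dl_inv.
    by lia.
have hC : inS (word_eval (comm_word a [:: inv_letter l])).
  by apply: inS_comm => //; apply: ok1.
have := inS_comp IHab (inS_conj' hb hC).
congr inS; apply: funext => xi /=.
rewrite ew /comm_word !word_eval_catE !eval_invr.
have -> : word_inv [:: inv_letter l] = [:: l].
  by rewrite /word_inv /= -[in RHS](inv_letterK l).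
by [].
Qed.



Definition gX0 := GX [:: false].
Definition gX1 := GX [:: true].
Definition gY := GY [:: false; true].

Definition e0 w := netexp gX0 (substw w).
Definition e1 w := netexp gX1 (substw w).

Lemma substw_cons l w : substw (l :: w) = subst1 l ++ substw w.
Proof. by []. Qed.
Lemma substw_cat a b : substw (a ++ b) = substw a ++ substw b.
Proof. by rewrite /substw map_cat flatten_cat. Qed.
Lemma subst1_inv l : subst1 (inv_letter l) = word_inv (subst1 l).
Proof. by case: l => g [|]; rewrite /subst1 /= ?word_invK. Qed.
Lemma substw_inv w : substw (word_inv w) = word_inv (substw w).
Proof.
elim: w => [|l w IH] //.
by rewrite word_inv_cons substw_cat IH substw_cons word_inv_cat /substw /= cats0 subst1_inv.
Qed.

Lemma netexp_comm gg u v : netexp gg (substw (comm_word u v)) = 0%R.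
Proof.
rewrite /comm_word !substw_cat !netexp_cat !substw_inv !netexp_inv.
by lia.
Qed.

Lemma netexp_comms gg ps : netexp gg (substw (comms ps)) = 0%R.
Proof.
elim: ps => [|p ps IH]; first by rewrite /comms /= netexp_nil.
have -> : comms (p :: ps) = comm_word p.1 p.2 ++ comms ps by [].
by rewrite substw_cat netexp_cat netexp_comm IH addr0.
Qed.

Lemma comms_ok ps : okps ps -> word_ok (comms ps).
Proof.
elim: ps => [|p ps IH] /=; first by move=> _; exact: word_ok_nil.
move=> [[h1 h2] h3]; have -> : comms (p :: ps) = comm_word p.1 p.2 ++ comms ps by [].
apply/word_ok_cat; split; last exact: IH.
rewrite /comm_word; apply/word_ok_cat; split; first exact: word_ok_inv.
apply/word_ok_cat; split; first exact: word_ok_inv.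
by apply/word_ok_cat.
Qed.

Lemma yexp_cons l w : y_exponent (l :: w) =
  ((match l with (GY _, false) => 1 | (GY _, true) => -1 | _ => 0 end) + y_exponent w)%R.
Proof. by rewrite /y_exponent big_cons. Qed.

Lemma netexp_y w : netexp gY (substw w) = y_exponent w.
Proof.
elim: w => [|l w IH]; first by rewrite /y_exponent big_nil netexp_nil.
rewrite substw_cons netexp_cat IH yexp_cons; congr (_ + _)%R.
case: l => [[s|s] b]; rewrite /subst1 /=.
- have h0 : netexp gY (sp (GX s)) = 0%R.
    rewrite /sp; case: s => [|c s]; first by rewrite !netexp_cons netexp_nil.
    case: ifP => _; first by rewrite !netexp_cons netexp_nil.
    by case: ifP => _; rewrite ?netexp_cons netexp_nil.
  by case: b; rewrite ?netexp_inv h0 ?oppr0.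
- by case: b; rewrite ?netexp_inv netexp_cons netexp_nil /dl eqxx.
Qed.

Lemma netexp_other gg l : gcode gg != gcode gX0 -> gcode gg != gcode gX1 ->
  gcode gg != gcode gY -> netexp gg (subst1 l) = 0%R.
Proof.
move=> h0 h1 h2.
have d0 : dl gg x0l = 0%R by rewrite /dl eq_sym (negbTE h0).
have d1 : dl gg x1l = 0%R by rewrite /dl eq_sym (negbTE h1).
have d2 : dl gg y01l = 0%R by rewrite /dl eq_sym (negbTE h2).
have hs : forall g, netexp gg (sp g) = 0%R.
  move=> [[|c s]|s] /=.
  - by rewrite !netexp_cons netexp_nil d0 d1 !addr0.
  - case: ifP => _; first by rewrite netexp_cons netexp_nil d0 addr0.
    by case: ifP => _; rewrite ?netexp_cons netexp_nil ?d1 ?addr0.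
  - by rewrite netexp_cons netexp_nil d2 addr0.
by rewrite /subst1; case: ifP => _; rewrite ?netexp_inv hs ?oppr0.
Qed.

Lemma netexp_other_w gg w : gcode gg != gcode gX0 -> gcode gg != gcode gX1 ->
  gcode gg != gcode gY -> netexp gg (substw w) = 0%R.
Proof.
move=> h0 h1 h2; elim: w => [|l w IH]; first by rewrite netexp_nil.
by rewrite substw_cons netexp_cat IH netexp_other // addr0.
Qed.

Lemma all_zero w : e0 w = 0%R -> e1 w = 0%R -> y_exponent w = 0%R ->
  forall gg, netexp gg (substw w) = 0%R.
Proof.
move=> h0 h1 h2 gg.
case: (eqVneq (gcode gg) (gcode gX0)) => [/gcode_inj -> //|n0].
case: (eqVneq (gcode gg) (gcode gX1)) => [/gcode_inj -> //|n1].
case: (eqVneq (gcode gg) (gcode gY)) => [/gcode_inj ->|n2].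
  by rewrite netexp_y.
exact: netexp_other_w.
Qed.



Lemma appN a c (b : bool) eta : app (nseq a b) (app (nseq c b) eta) = app (nseq (a + c) b) eta.
Proof. by rewrite nseqD app_cat. Qed.

Lemma hp_false (b : bool) s n eta : (~~ b) \in s -> size s <= n ->
  has_prefix s (app (nseq n b) eta) = false.
Proof.
move=> hin hs; apply/negP => /has_prefixP [z e].
set i := index (~~ b) s.
have hi : i < size s by rewrite index_mem.
have := congr1 (fun x => x i) e; rewrite /app size_nseq hi (leq_trans hi hs).
rewrite nth_nseq (leq_trans hi hs) nth_index //.
by case: (b).
Qed.

Definition d0 l := netexp gX0 (subst1 l).
Definition d1 l := netexp gX1 (subst1 l).

Lemma sp_allf s : all (pred1 false) s -> netexp gX0 (sp (GX s)) = 1%R.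
Proof.
case: s => [|c s] h; first by rewrite /= !netexp_cons netexp_nil /dl /= add0r addr0.
move: h => /= ->.
by rewrite netexp_cons netexp_nil /dl /= addr0.
Qed.

Lemma sp_allt s : all (pred1 true) s -> netexp gX1 (sp (GX s)) = 1%R.
Proof.
case: s => [|c s] h; first by rewrite /= !netexp_cons netexp_nil /dl /= addr0.
move: h => /= /andP [/eqP ec hs]; subst c; rewrite /= hs.
by rewrite netexp_cons netexp_nil /dl /= addr0.
Qed.

Lemma sp_nallf s : ~~ all (pred1 false) s -> netexp gX0 (sp (GX s)) = 0%R.
Proof.
case: s => [|c s] h //; move: h => /= /negbTE ->.
by case: ifP => _; rewrite ?netexp_cons netexp_nil /dl /= ?addr0.
Qed.

Lemma sp_nallt s : ~~ all (pred1 true) s -> netexp gX1 (sp (GX s)) = 0%R.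
Proof.
case: s => [|c s] h //; move: h => /= /negbTE h.
by case: ifP => _; [|rewrite h]; rewrite ?netexp_cons netexp_nil /dl /= ?addr0.
Qed.

Lemma subst1_val gg g b : netexp gg (subst1 (g, b)) = (sgn b * netexp gg (sp g))%R.
Proof. by rewrite /subst1; case: b => /=; rewrite ?netexp_inv ?mulN1r ?mul1r. Qed.

Lemma nall_in (b : bool) s : ~~ all (pred1 b) s -> (~~ b) \in s.
Proof. by move=> /allPn [x hx /= hx1]; move: hx1 hx; case: x; case: b. Qed.

Lemma app_nseqE a b (c : bool) eta : a = b -> app (nseq a c) eta = app (nseq b c) eta.
Proof. by move=> ->. Qed.

Lemma split3 k j m (c : bool) eta : app (nseq (k + j + m) c) eta =
  app (nseq k c) (app (nseq j c) (app (nseq m c) eta)).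
Proof. by rewrite !appN. Qed.

Lemma germ0_letter l : letter_ok l -> exists K q : nat,
  (q%:Z = K%:Z - d0 l)%R /\
  forall m eta, letter_map l (app (nseq (K + m) false) eta) = app (nseq (q + m) false) eta.
Proof.
case: l => [[s|s] b] hok; rewrite /d0 subst1_val.
- case: (boolP (all (pred1 false) s)) => ha.
  + rewrite sp_allf // mulr1.
    have es := all_nseqE ha; set k := size s in es.
    clear hok; case: b.
    * exists (k + 2), (k + 3); split; first by rewrite /sgn; lia.
      move=> m eta; rewrite es /=.
      rewrite (app_nseqE _ _ (_ : k + 2 + m = k + 1 + (m + 1))); last by lia.
      rewrite split3 localize_app.
      rewrite (_ : nseq 1 false = [:: false]) // xinv_0.
      rewrite (_ : [:: false; false] = nseq 2 false) // !appN.
      by apply: app_nseqE; lia.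
    * exists (k + 2), (k + 1); split; first by rewrite /sgn; lia.
      move=> m eta; rewrite es /=.
      rewrite split3 localize_app.
      rewrite (_ : nseq 2 false = [:: false; false]) // xmap_00.
      rewrite (_ : [:: false] = nseq 1 false) // !appN.
      by apply: app_nseqE; lia.
  + have h0 := sp_nallf ha.
    exists (size s), (size s); split; first by rewrite h0 mulr0 subr0.
    move=> m eta; have hin := nall_in ha.
    by case: b {hok}; rewrite /= localize_nop // hp_false // leq_addr.
- have hs : nonconst s by apply/nonconstP.
  have h0 : netexp gX0 (sp (GY s)) = 0%R by rewrite /= netexp_cons netexp_nil.
  exists (size s), (size s); split; first by rewrite h0 mulr0 subr0.
  move=> m eta.
  move: hs => /andP [_ ht].
  by case: b {hok}; rewrite /= localize_nop // hp_false // leq_addr.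
Qed.

Lemma germ1_letter l : letter_ok l -> exists K q : nat,
  (q%:Z = K%:Z + d1 l)%R /\
  forall m eta, letter_map l (app (nseq (K + m) true) eta) = app (nseq (q + m) true) eta.
Proof.
case: l => [[s|s] b] hok; rewrite /d1 subst1_val.
- case: (boolP (all (pred1 true) s)) => ha.
  + rewrite sp_allt // mulr1.
    have es := all_nseqE ha; set k := size s in es.
    clear hok; case: b.
    * exists (k + 2), (k + 1); split; first by rewrite /sgn; lia.
      move=> m eta; rewrite es /=.
      rewrite split3 localize_app.
      rewrite (_ : nseq 2 true = [:: true; true]) // xinv_11.
      rewrite (_ : [:: true] = nseq 1 true) // !appN.
      by apply: app_nseqE; lia.
    * exists (k + 2), (k + 3); split; first by rewrite /sgn; lia.
      move=> m eta; rewrite es /=.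
      rewrite (app_nseqE _ _ (_ : k + 2 + m = k + 1 + (m + 1))); last by lia.
      rewrite split3 localize_app.
      rewrite (_ : nseq 1 true = [:: true]) // xmap_1.
      rewrite (_ : [:: true; true] = nseq 2 true) // !appN.
      by apply: app_nseqE; lia.
  + have h0 := sp_nallt ha.
    exists (size s), (size s); split; first by rewrite h0 mulr0 addr0.
    move=> m eta; have hin := nall_in ha.
    by case: b {hok}; rewrite /= localize_nop // hp_false // leq_addr.
- have hs : nonconst s by apply/nonconstP.
  have h0 : netexp gX1 (sp (GY s)) = 0%R by rewrite /= netexp_cons netexp_nil.
  exists (size s), (size s); split; first by rewrite h0 mulr0 addr0.
  move=> m eta.
  move: hs => /andP [hf _].
  by case: b {hok}; rewrite /= localize_nop // hp_false // leq_addr.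
Qed.


Section PartH.

Lemma e0_cons l w : e0 (l :: w) = (d0 l + e0 w)%R.
Proof. by rewrite /e0 substw_cons netexp_cat. Qed.
Lemma e1_cons l w : e1 (l :: w) = (d1 l + e1 w)%R.
Proof. by rewrite /e1 substw_cons netexp_cat. Qed.

Lemma germ0 w : word_ok w -> exists N p : nat, (p%:Z = N%:Z - e0 w)%R /\
  forall m eta, word_eval w (app (nseq (N + m) false) eta) = app (nseq (p + m) false) eta.
Proof.
elim: w => [|l w IH].
  by move=> _; exists 0, 0; split; [rewrite /e0 /= netexp_nil|].
move=> /word_ok_cons [hl hw].
have [N [p [hp ew]]] := IH hw.
have [K [q [hq el]]] := germ0_letter hl.
exists (N + K), (q + p); split; first by rewrite e0_cons; lia.
move=> m eta; rewrite word_eval_cons -addnA ew.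
rewrite (app_nseqE _ _ (_ : p + (K + m) = K + (p + m))); last by lia.
by rewrite el addnA.
Qed.

Lemma germ1 w : word_ok w -> exists N p : nat, (p%:Z = N%:Z + e1 w)%R /\
  forall m eta, word_eval w (app (nseq (N + m) true) eta) = app (nseq (p + m) true) eta.
Proof.
elim: w => [|l w IH].
  by move=> _; exists 0, 0; split; [rewrite /e1 /= netexp_nil|].
move=> /word_ok_cons [hl hw].
have [N [p [hp ew]]] := IH hw.
have [K [q [hq el]]] := germ1_letter hl.
exists (N + K), (q + p); split; first by rewrite e1_cons; lia.
move=> m eta; rewrite word_eval_cons -addnA ew.
rewrite (app_nseqE _ _ (_ : p + (K + m) = K + (p + m))); last by lia.
by rewrite el addnA.
Qed.

Lemma mob_S n xi : mob n.+1 xi = (let: (a, b, c, d) := mob n xi in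
            if xi n then (a, a + b, c, c + d) else (a + b, b, c + d, d))%N.
Proof. by []. Qed.

Lemma mob_cons n b z : mob n.+1 (app [:: b] z) =
  (let: (a, bb, c, d) := mob n z in
   if b then (a + c, bb + d, c, d) else (a, bb, a + c, bb + d))%N.
Proof.
elim: n => [|n IH]; first by rewrite /= app_cons0; case: b.
rewrite [LHS]mob_S IH app_consS app_nil [mob n.+1 z]mob_S.
case: (mob n z) => [[[a bb] c] d].
by clear IH; case: b; case: (z n); congr (_, _, _, _); lia.
Qed.

Lemma mob_d n xi : (0 < (mob n xi).2)%N.
Proof.
elim: n => [//|n IH]; rewrite mob_S; move: IH.
case: (mob n xi) => [[[a bb] c] d] /= IH.
by case: (xi n) => /=; lia.
Qed.

Lemma mob_zeros n : ((mob n (fun _ => false)).1.1.2 = 0)%N.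
Proof.
elim: n => [//|n IH]; rewrite mob_S; move: IH.
by case: (mob n _) => [[[a bb] c] d] /= ->.
Qed.

Local Open Scope ring_scope.

Lemma pa_ge0 n xi : 0 <= phi_approx n xi.
Proof.
rewrite /phi_approx; case: (mob n xi) => [[[a bb] c] d].
by apply: divr_ge0; apply: ler0n.
Qed.

Lemma pa_true n z : phi_approx n.+1 (app [:: true] z) = 1 + phi_approx n z.
Proof.
rewrite /phi_approx mob_cons; have := mob_d n z.
case: (mob n z) => [[[a bb] c] d] hd.
have hd0 : (d%:R : R) != 0 by rewrite pnatr_eq0; move: hd => /= hd; lia.
rewrite natrD mulrDl (divff hd0).
exact: addrC.
Qed.

Lemma pa_false n z : phi_approx n.+1 (app [:: false] z) <= 1.
Proof.
rewrite /phi_approx mob_cons; have := mob_d n z.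
case: (mob n z) => [[[a bb] c] d] hd.
move: hd => /= hd.
rewrite ler_pdivrMr ?mul1r ?ler_nat; last by rewrite ltr0n; lia.
by lia.
Qed.

Lemma pa0 xi : phi_approx 0 xi = 0.
Proof. by rewrite /phi_approx /= mul0r. Qed.

Lemma pa_zeros n : phi_approx n (fun _ => false) = 0.
Proof.
rewrite /phi_approx; have := mob_zeros n.
by case: (mob n _) => [[[a bb] c] d] /= ->; rewrite mul0r.
Qed.

Lemma pa_ones j n : phi_approx n (app (nseq j true) (fun _ => false)) = (minn n j)%:R.
Proof.
elim: j n => [|j IH] n.
  by rewrite app_nil pa_zeros minn0.
case: n => [|n]; first by rewrite pa0 min0n.
rewrite (_ : nseq j.+1 true = [:: true] ++ nseq j true) // app_cat pa_true IH.
by rewrite minnSS -natr1 addrC.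
Qed.

Lemma pa_le j xi : xi j = false -> forall n, phi_approx n xi <= j.+1%:R.
Proof.
elim: j xi => [|j IH] xi hj n; rewrite (cantor_dec xi);
  case: n => [|n]; rewrite ?pa0 ?ler0n //.
- by move: hj; case: (xi 0) => // _; apply: (le_trans (pa_false _ _)); rewrite ler1n.
- case: (xi 0).
    rewrite pa_true -natr1 addrC lerD2r; apply: IH.
    by rewrite /shift.
  by apply: (le_trans (pa_false _ _)); rewrite ler1n.
Qed.

Lemma phi_ge0 xi : (0 <= phi xi)%E.
Proof.
rewrite /phi; apply: (le_trans _ (ereal_sup_ubound _)); last by exists 0.
by rewrite pa0.
Qed.

Lemma phi_le xi (c : R) : (forall n, phi_approx n xi <= c) -> (phi xi <= c%:E)%E.
Proof.
move=> h; apply: ge_ereal_sup => _ [n _ <-]; by rewrite lee_fin.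
Qed.

Lemma phi_ones j : phi (app (nseq j true) (fun _ => false)) = (j%:R)%:E.
Proof.
apply/le_anti/andP; split.
  by apply: phi_le => n; rewrite pa_ones ler_nat geq_minr.
apply: (le_trans _ (ereal_sup_ubound _)); last by exists j.
by rewrite pa_ones minnn.
Qed.

Lemma Phi_ones j : Phi (app (nseq j.+1 true) (fun _ => false)) = (j%:R)%:E.
Proof. by rewrite /Phi app_cons0 shift1_cons phi_ones. Qed.

Lemma neg_app j : (fun n => ~~ app (nseq j.+1 false) (fun _ => true) n.+1) =
   app (nseq j true) (fun _ => false).
Proof.
apply: funext => n; rewrite app_consS /app !size_nseq !nth_nseq.
by case: (n < j)%N.
Qed.

Lemma Phi_zeros j : Phi (app (nseq j.+1 false) (fun _ => true)) = (- j%:R)%:E.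
Proof. by rewrite /Phi app_cons0 /= neg_app phi_ones EFinN. Qed.

End PartH.

Section PartI.

Lemma prefix_const (xi : Cantor) K b : (forall i, i < K -> xi i = b) ->
  xi = app (nseq K b) (shift K xi).
Proof.
move=> h; apply: funext => n; rewrite /app size_nseq nth_nseq /shift.
by case: ltnP => hn; [rewrite h|rewrite subnKC].
Qed.

Local Open Scope ring_scope.

Lemma Phi_small_true xi i : xi 0 = true -> (0 < i)%N -> xi i = false ->
  (`|Phi xi| <= (i%:R)%:E)%E.
Proof.
move=> h0 hi hf; rewrite /Phi h0 gee0_abs ?phi_ge0 //.
apply: phi_le => n.
have -> : i = i.-1.+1 by lia.
apply: pa_le; rewrite /shift add1n (_ : i.-1.+1 = i) //; lia.
Qed.

Lemma Phi_small_false xi i : xi 0 = false -> (0 < i)%N -> xi i = true ->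
  (`|Phi xi| <= (i%:R)%:E)%E.
Proof.
move=> h0 hi hf; rewrite /Phi h0 /= abseN gee0_abs ?phi_ge0 //.
apply: phi_le => n.
have -> : i = i.-1.+1 by lia.
apply: pa_le => /=; rewrite (_ : i.-1.+1 = i) ?hf //; lia.
Qed.

Lemma forward ps : okps ps -> compact_support (word_eval (comms ps)).
Proof.
move=> hps; set W := comms ps.
have hW : word_ok W := comms_ok hps.
have [N0 [p0 [hp0 E0]]] := germ0 hW.
have [N1 [p1 [hp1 E1]]] := germ1 hW.
have ep0 : p0 = N0 by move: hp0; rewrite /e0 netexp_comms; lia.
have ep1 : p1 = N1 by move: hp1; rewrite /e1 netexp_comms; lia.
exists (N0 + N1 + 1)%:R => xi hxi.
suff -> : word_eval W xi = xi by [].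
set K := (N0 + N1 + 1)%N in hxi.
have contra i : (i < K)%N -> (`|Phi xi| <= (i%:R)%:E)%E -> False.
  move=> hi hle; have := lt_le_trans hxi hle; rewrite lte_fin ltr_nat; lia.
case h0: (xi 0).
- have hall : forall i, (i < K)%N -> xi i = true.
    move=> i hi; case hxi_i: (xi i) => //; exfalso.
    have hi0 : (0 < i)%N by case: i hi hxi_i => //; rewrite h0.
    exact: contra hi (Phi_small_true h0 hi0 hxi_i).
  have E := prefix_const hall; rewrite E.
  rewrite (app_nseqE _ _ (_ : K = N1 + (N0 + 1))%N); last by rewrite /K; lia.
  by rewrite E1 ep1.
- have hall : forall i, (i < K)%N -> xi i = false.
    move=> i hi; case hxi_i: (xi i) => //; exfalso.
    have hi0 : (0 < i)%N by case: i hi hxi_i => //; rewrite h0.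
    exact: contra hi (Phi_small_false h0 hi0 hxi_i).
  have E := prefix_const hall; rewrite E.
  rewrite (app_nseqE _ _ (_ : K = N0 + (N1 + 1))%N); last by rewrite /K; lia.
  by rewrite E0 ep0.
Qed.

Lemma backward_e w : word_ok w -> compact_support (word_eval w) ->
  e0 w = 0 /\ e1 w = 0.
Proof.
move=> hw [M hM].
have [N0 [p0 [hp0 E0]]] := germ0 hw.
have [N1 [p1 [hp1 E1]]] := germ1 hw.
set B := Num.Def.archi_bound `|M|.
have hB : `|M| < B%:R by apply: archi_boundP.
have hMB : M < B%:R by apply: (le_lt_trans _ hB); exact: ler_norm.
have big k : M < (k + B)%:R.
  by apply: (lt_le_trans hMB); rewrite ler_nat leq_addl.
split.
- have hx : (M%:E < `|Phi (app (nseq (N0 + B.+1) false) (fun _ => true))|)%E.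
    rewrite (addnS N0 B) Phi_zeros abse_EFin normrN ger0_norm ?ler0n // lte_fin.
    exact: big.
  have := hM _ hx.
  rewrite E0 (addnS N0 B) (addnS p0 B) !Phi_zeros.
  move=> [] /oppr_inj /eqP; rewrite eqr_nat => /eqP e.
  by move: hp0; lia.
- have hx : (M%:E < `|Phi (app (nseq (N1 + B.+1) true) (fun _ => false))|)%E.
    rewrite (addnS N1 B) Phi_ones abse_EFin ger0_norm ?ler0n // lte_fin.
    exact: big.
  have := hM _ hx.
  rewrite E1 (addnS N1 B) (addnS p1 B) !Phi_ones.
  move=> [] /eqP; rewrite eqr_nat => /eqP e.
  by move: hp1; lia.
Qed.


End PartI.

Theorem mainTheorem4 (g : Cantor -> Cantor) :
  inG0' g <->
  (inG0 g /\ compact_support g /\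
   exists w : word, word_ok w /\ map_eq (word_eval w) g /\ y_exponent w = 0%R).
Proof.
rewrite inG0'E; split.
- move=> [ps [hps eg]].
  have hW := comms_ok hps.
  have hy : y_exponent (comms ps) = 0%R by rewrite -netexp_y netexp_comms.
  split; first by exists (comms ps); split => // xi n; rewrite eg.
  split; first by rewrite eg; exact: forward.
  by exists (comms ps); split => //; split => // xi n; rewrite eg.
- move=> [_ [hc [w [hw [ew hy]]]]].
  have eg : g = word_eval w.
    by apply: funext => xi; apply: funext => n; rewrite ew.
  rewrite eg in hc *.
  have [h0 h1] := backward_e hw hc.
  have hz := zero_sum (@substw_ok w) (all_zero h0 h1 hy).
  have [c [hcS ec]] := subst_eval hw.
  rewrite ec; exact: inS_comp hz hcS.
Qed.
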